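(* For each integer $s\geq 2$, \[\lim_{t\to\infty}\sqrt[t]{A_{321}(K_{s,t}^\beta)}=2^s.\]
   Context: The comb $K_{s,t}$ has elements $e_{i,j}$, $1\le i\le s$, $1\le j\le t$, with partial order generated by the covers $e_{i,1}\lessdot e_{i+1,1}$ ($1\le i\le s-1$) and $e_{i,j}\lessdot e_{i,j+1}$ ($1\le j\le t-1$). $K^\beta_{s,t}$ is the labeled poset on $[st]$ obtained by giving $e_{i,j}$ the label $(i-1)t+j$. A linear extension is a permutation of $[st]$ in which $x$ precedes $y$ whenever $x<y$ in the poset; $A_{321}(P)$ is the number of linear extensions of $P$ avoiding the pattern $321$. *)

(* Defs.v *)
From mathcomp Require Import all_boot all_fingroup.
Set Implicit Arguments. Unset Strict Implicit. Unset Printing Implicit Defensive.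

(* Labels are 0-indexed: label a : 'I_(s*t) stands for the element
   e_{i+1,j+1} of the comb K_{s,t} with i = a %/ t, j = a %% t, i.e. the
   paper's label (i-1)t+j shifted down by one. *)

(* Cover relations of the comb: e_{i,1} <. e_{i+1,1} and e_{i,j} <. e_{i,j+1}. *)
Definition comb_cover (s t : nat) : rel 'I_(s * t) :=
  fun a b =>
    (((a %% t == 0) && (b %% t == 0)) && (b %/ t == (a %/ t).+1))
    || ((b %/ t == a %/ t) && (b %% t == (a %% t).+1)).

Definition comb_lt (s t : nat) (a b : 'I_(s * t)) : bool :=
  (a != b) && connect (@comb_cover s t) a b.

(* A permutation sigma is read as the word sigma 0, sigma 1, ..., sigma (n-1);
   the position of label x in that word is sigma^-1 x. *)
Definition is_linext (s t : nat) (sigma : {perm 'I_(s * t)}) : bool :=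
  [forall x, forall y, comb_lt x y ==> ((sigma^-1)%g x < (sigma^-1)%g y)].

Definition contains321 (n : nat) (sigma : {perm 'I_n}) : bool :=
  [exists p : 'I_n, exists q : 'I_n, exists r : 'I_n,
     [&& p < q, q < r, sigma q < sigma p & sigma r < sigma q]].

Definition A321_comb (s t : nat) : nat :=
  #|[set sigma : {perm 'I_(s * t)} | is_linext sigma && ~~ contains321 sigma]|.

(* Main.v *)
Require Import Defs.
From Stdlib Require Import Reals.
Open Scope R_scope.
From Stdlib Require Import Lra Psatz.
From mathcomp Require all_boot all_fingroup zify.

Module Aux.
Import all_boot all_fingroup zify.
Set Implicit Arguments. Unset Strict Implicit. Unset Printing Implicit Defensive.
Local Open Scope nat_scope.

Lemma divmodU t q r x : r < t -> x = q * t + r -> x %/ t = q /\ x %% t = r.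
Proof.
move=> rt ->; have tpos : 0 < t by apply: leq_ltn_trans rt.
by rewrite divnMDl // modnMDl divn_small // addn0 modn_small.
Qed.

Section Up.
Variables s t : nat.
Hypothesis tpos : 0 < t.
Local Notation n := (s * t).

Lemma cover_lt (sigma : {perm 'I_n}) (x y : 'I_n) :
  is_linext sigma -> comb_cover x y -> (sigma^-1)%g x < (sigma^-1)%g y.
Proof.
move=> /forallP/(_ x)/forallP/(_ y)/implyP H cxy; apply: H.
rewrite /comb_lt connect1 // andbT; apply/eqP => exy; subst y.
move: cxy; rewrite /comb_cover => /orP[/andP[_ /eqP]|/andP[_ /eqP]]; lia.
Qed.

Lemma block_chain (sigma : {perm 'I_n}) (x y : 'I_n) :
  is_linext sigma -> x %/ t = y %/ t -> x %% t < y %% t ->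
  (sigma^-1)%g x < (sigma^-1)%g y.
Proof.
move=> le; move Hd: (y %% t - x %% t) => d.
elim: d y Hd => [|d IH] y Hd bxy oxy; first by lia.
have y0 : 0 < y %% t by lia.
have ypos : 0 < (y : nat).
  by case: (posnP (y : nat)) y0 => // ->; rewrite mod0n.
have y'lt : (y : nat).-1 < n by apply: leq_ltn_trans (leq_pred _) (ltn_ord y).
pose y' := Ordinal y'lt.
have [d1 d2] : y' %/ t = y %/ t /\ y' %% t = (y %% t).-1.
  apply: divmodU; first by apply: leq_ltn_trans (leq_pred _) (ltn_pmod _ tpos).
  rewrite /= {1}(divn_eq y t); lia.
have cy : comb_cover y' y by rewrite /comb_cover d1 d2 eqxx /=; apply/orP; right; lia.
case: d Hd IH => [|d] Hd IH.
  have -> : x = y'.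
    apply: val_inj; rewrite /= (divn_eq x t) (divn_eq y t) bxy; lia.
  exact: cover_lt.
apply: ltn_trans (cover_lt le cy); apply: IH; rewrite ?d1 ?d2; lia.
Qed.

Lemma blockY (i off : nat) : i < s -> off <= t ->
  #|[set y : 'I_n | (y %/ t == i) && (y %% t < off)]| = off.
Proof.
move=> Hi ot.
have gP (j : 'I_off) : i * t + j < n.
  have : i * t + j < i.+1 * t by have := ltn_ord j; rewrite mulSn; lia.
  move=> h; apply: (leq_trans h); by rewrite leq_mul2r Hi orbT.
pose g (j : 'I_off) : 'I_n := Ordinal (gP j).
have -> : [set y : 'I_n | (y %/ t == i) && (y %% t < off)] = g @: 'I_off.
  apply/setP => y; rewrite inE; apply/andP/imsetP.
    move=> [/eqP yi yo]; exists (Ordinal yo) => //; apply: val_inj.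
    by rewrite /= {1}(divn_eq y t) yi addnC.
  move=> [j _ ->]; have [] := @divmodU t i j (i * t + j).
  - exact: leq_trans (ltn_ord j) ot.
  - by [].
  by move=> /= -> ->; rewrite eqxx ltn_ord.
rewrite card_imset ?card_ord //.
by move=> j j' /(congr1 val) /= /eqP; rewrite eqn_add2l => /eqP /val_inj.
Qed.

Lemma offset_count (sigma : {perm 'I_n}) (p : 'I_n) : is_linext sigma ->
  #|[set q : 'I_n | (q < p) && (sigma q %/ t == sigma p %/ t)]| = sigma p %% t.
Proof.
move=> le.
have key : [set q : 'I_n | (q < p) && (sigma q %/ t == sigma p %/ t)] =
   sigma @^-1: [set y : 'I_n | (y %/ t == sigma p %/ t) && (y %% t < sigma p %% t)].
  apply/setP => q; rewrite !inE; apply/andP/andP.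
  - move=> [H1 /eqP H2]; split; first by apply/eqP.
    rewrite ltnNge; apply/negP => H3.
    case: (ltngtP (sigma p %% t) (sigma q %% t)) H3 => // H4 _.
    + have := block_chain le (esym H2) H4; rewrite !permK; lia.
    + have eq : sigma q = sigma p.
        by apply: val_inj; rewrite /= (divn_eq (sigma q) t) (divn_eq (sigma p) t) H2 H4.
      move: (perm_inj eq) H1 => ->; by rewrite ltnn.
  - move=> [/eqP H2 H1]; split; last by apply/eqP.
    have := block_chain le H2 H1; by rewrite !permK.
rewrite key card_preimset; last exact: perm_inj.
apply: blockY; last exact/ltnW/ltn_pmod.
by rewrite ltn_divLR.
Qed.

Lemma linext_decomp (sigma : {perm 'I_n}) (p : 'I_n) : is_linext sigma ->
  (sigma p : nat) = sigma p %/ t * t +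
     #|[set q : 'I_n | (q < p) && (sigma q %/ t == sigma p %/ t)]|.
Proof. by move=> le; rewrite offset_count // -divn_eq. Qed.


Definition good (sigma : {perm 'I_n}) := is_linext sigma && ~~ contains321 sigma.
Definition SS (sigma : {perm 'I_n}) : {set 'I_n} :=
  [set p : 'I_n | [forall q : 'I_n, (q < p) ==> (sigma q < sigma p)]].
Definition Lcnt (sigma : {perm 'I_n}) (C : {set 'I_n}) (j : nat) :=
  #|[set q | (q \in C) && (sigma q %/ t < j)]|.
Definition enc (sigma : {perm 'I_n}) :=
  (SS sigma, [ffun j : 'I_s => inord (Lcnt sigma (SS sigma) j) : 'I_n.+1],
             [ffun j : 'I_s => inord (Lcnt sigma (~: SS sigma) j) : 'I_n.+1]).

Lemma mono_C (sigma : {perm 'I_n}) (C : {set 'I_n}) (q1 q2 : 'I_n) :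
  ~~ contains321 sigma -> (C = SS sigma \/ C = ~: SS sigma) ->
  q1 \in C -> q2 \in C -> q1 < q2 -> sigma q1 < sigma q2.
Proof.
move=> n321 [->|->] H1 H2 lt12.
  by move: H2; rewrite inE => /forallP/(_ q1)/implyP; apply.
move: H1 H2; rewrite !inE => /forallPn [r]; rewrite negb_imply => /andP[r1 hr] _.
rewrite ltnNge; apply/negP => H3.
have ne : sigma q2 != sigma q1 by rewrite (inj_eq perm_inj); apply/eqP => e; move: lt12; rewrite e ltnn.
have ne2 : sigma r != sigma q1 by rewrite (inj_eq perm_inj); apply/eqP => e; move: r1; rewrite e ltnn.
move/negP: n321; apply; apply/existsP; exists r; apply/existsP; exists q1; apply/existsP; exists q2.
rewrite r1 lt12 /=; apply/andP; split; rewrite ltn_neqAle.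
- by rewrite eq_sym ne2 leqNgt.
- by rewrite ne H3.
Qed.

Lemma char_C (sigma : {perm 'I_n}) (C : {set 'I_n}) (p : 'I_n) (j : nat) :
  ~~ contains321 sigma -> (C = SS sigma \/ C = ~: SS sigma) -> p \in C ->
  (j <= sigma p %/ t) = (Lcnt sigma C j <= #|[set q | (q \in C) && (q < p)]|).
Proof.
move=> n321 hC pC.
have mono q1 q2 : q1 \in C -> q2 \in C -> q1 < q2 -> sigma q1 %/ t <= sigma q2 %/ t.
  by move=> h1 h2 h12; apply: leq_div2r; apply: ltnW; exact: (mono_C n321 hC h1 h2 h12).
rewrite /Lcnt; case: (leqP j (sigma p %/ t)) => hj; symmetry.
- apply: subset_leq_card; apply/subsetP => q; rewrite !inE => /andP[qC qj].
  rewrite qC /=; case: (ltngtP q p) => // [pq|/val_inj eq]; last by move: qj; rewrite eq; lia.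
  by have := mono _ _ pC qC pq; lia.
- apply/negbTE; rewrite -ltnNge; apply: proper_card; apply/properP; split.
  + apply/subsetP => q; rewrite !inE => /andP[qC qp]; rewrite qC /=.
    by have := mono _ _ qC pC qp; lia.
  + by exists p; rewrite !inE ?pC ?hj ?ltnn.
Qed.

Lemma Lcnt_le (sigma : {perm 'I_n}) C j : Lcnt sigma C j <= n.
Proof. by rewrite /Lcnt; apply: leq_trans (max_card _) _; rewrite card_ord. Qed.

Lemma enc_inj : {in [set sigma | good sigma] &, injective enc}.
Proof.
move=> s1 s2; rewrite !inE => /andP[l1 n1] /andP[l2 n2] [eS e1 e2].
have eL1 (j : 'I_s) : Lcnt s1 (SS s1) j = Lcnt s2 (SS s2) j.
  have := congr1 (fun f : {ffun 'I_s -> 'I_n.+1} => val (f j)) e1; rewrite /= !ffunE !inordK //; by rewrite ltnS Lcnt_le.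
have eL2 (j : 'I_s) : Lcnt s1 (~: SS s1) j = Lcnt s2 (~: SS s2) j.
  have := congr1 (fun f : {ffun 'I_s -> 'I_n.+1} => val (f j)) e2; rewrite /= !ffunE !inordK //; by rewrite ltnS Lcnt_le.
have hbw p : s1 p %/ t = s2 p %/ t.
  have key (j : 'I_s) : (j <= s1 p %/ t) = (j <= s2 p %/ t).
    case: (boolP (p \in SS s1)) => pS.
    - rewrite (char_C j n1 (or_introl erefl) pS).
      have pS2 : p \in SS s2 by rewrite -eS.
      by rewrite (char_C j n2 (or_introl erefl) pS2) eL1 eS.
    - have pS1 : p \in ~: SS s1 by rewrite inE.
      have pS2 : p \in ~: SS s2 by rewrite -eS.
      rewrite (char_C j n1 (or_intror erefl) pS1).
      by rewrite (char_C j n2 (or_intror erefl) pS2) eL2 eS.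
  have b1 : s1 p %/ t < s by rewrite ltn_divLR.
  have b2 : s2 p %/ t < s by rewrite ltn_divLR.
  have := key (Ordinal b1); have := key (Ordinal b2); rewrite /= !leqnn; lia.
apply/permP => p; apply: val_inj => /=.
rewrite (linext_decomp p l1) (linext_decomp p l2) hbw; congr (_ + _).
by apply: eq_card => q; rewrite !inE !hbw.
Qed.

Lemma card_setT (T : finType) : #|{: {set T}}| = 2 ^ #|T|.
Proof.
rewrite -cardsT -card_powerset; apply: eq_card => A.
rewrite powersetE subsetT. done.
Qed.

Lemma upper : A321_comb s t <= 2 ^ n * ((n.+1) ^ s * (n.+1) ^ s).
Proof.
rewrite /A321_comb -(card_in_imset enc_inj).
apply: leq_trans (max_card _) _.
by rewrite !card_prod (card_setT 'I_n) !card_ffun !card_ord mulnA.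
Qed.

End Up.

Section Word.
Variables s t : nat.
Local Notation n := (s * t).
Variable W : nat -> nat.
Hypothesis W1 : forall p : 'I_n, W p < s.
Hypothesis W2 : forall j, j < s -> #|[set p : 'I_n | W p == j]| = t.
Hypothesis W3 : forall p : 'I_n, 0 < W p -> exists q : 'I_n, q < p /\ W q = (W p).-1.
Hypothesis W4 : forall p q r : 'I_n, p < q -> q < r -> W q < W p -> W r < W q -> False.

Definition cnt (p : 'I_n) := #|[set q : 'I_n | (q < p) && (W q == W p)]|.

Lemma cnt_lt (p : 'I_n) : cnt p < t.
Proof.
rewrite -(W2 (W1 p)); apply: proper_card; apply/properP; split.
  by apply/subsetP => q; rewrite !inE => /andP[].
by exists p; rewrite !inE ?eqxx // ltnn.
Qed.

Lemma cnt_mono (p p' : 'I_n) : p < p' -> W p = W p' -> cnt p < cnt p'.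
Proof.
move=> lt e; apply: proper_card; apply/properP; split.
  apply/subsetP => q; rewrite !inE => /andP[qp /eqP ->]; rewrite e eqxx andbT.
  exact: ltn_trans qp lt.
by exists p; rewrite !inE ?e ?eqxx ?lt // ltnn.
Qed.

Lemma f_lt (p : 'I_n) : W p * t + cnt p < n.
Proof.
have h1 := cnt_lt p; have h2 := W1 p.
have : W p * t + cnt p < (W p).+1 * t by rewrite mulSn; lia.
move=> h; apply: (leq_trans h); by rewrite leq_mul2r h2 orbT.
Qed.

Definition fW (p : 'I_n) : 'I_n := insubd p (W p * t + cnt p).

Lemma fWE (p : 'I_n) : (fW p : nat) = W p * t + cnt p.
Proof. by rewrite val_insubd f_lt. Qed.

Lemma fW_div (p : 'I_n) : fW p %/ t = W p /\ fW p %% t = cnt p.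
Proof. by apply: divmodU; [exact: cnt_lt | exact: fWE]. Qed.

Lemma fW_inj : injective fW.
Proof.
move=> p p' e.
have [a1 b1] := fW_div p; have [a2 b2] := fW_div p'.
rewrite e in a1 b1; rewrite a1 in a2; rewrite b1 in b2.
case: (ltngtP p p') => [lt|lt|/val_inj //].
- by have := cnt_mono lt a2; rewrite b2 ltnn.
- by have := cnt_mono lt (esym a2); rewrite b2 ltnn.
Qed.

Definition sigW : {perm 'I_n} :=
  if (@injectiveP _ _ fW) is ReflectT inj then perm inj else 1%g.

Lemma sigWE (p : 'I_n) : sigW p = fW p.
Proof.
rewrite /sigW; case: injectiveP => [inj|ninj]; first by rewrite permE.
by case: (ninj fW_inj).
Qed.

Lemma fW_lt_W (p q : 'I_n) : p < q -> fW q < fW p -> W q < W p.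
Proof.
move=> pq; rewrite ltnNge; apply: contraNT; rewrite -leqNgt => h.
case: (ltngtP (W p) (W q)) h => // h _.
- rewrite !fWE ltnW //; have := cnt_lt p.
  have : (W p).+1 * t <= W q * t by rewrite leq_mul2r h orbT.
  rewrite mulSn; lia.
- by rewrite !fWE h leq_add2l ltnW // cnt_mono.
Qed.

Lemma sigW_n321 : ~~ contains321 sigW.
Proof.
apply/negP => /existsP[p /existsP[q /existsP[r /and4P[pq qr h1 h2]]]].
move: h1 h2; rewrite !sigWE => h1 h2.
exact: (W4 pq qr (fW_lt_W pq h1) (fW_lt_W qr h2)).
Qed.

Lemma sigW_cover (x y : 'I_n) : comb_cover x y -> (sigW^-1)%g x < (sigW^-1)%g y.
Proof.
set p := (sigW^-1)%g x; set p' := (sigW^-1)%g y.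
have ex : fW p = x by have := permKV sigW x; rewrite sigWE.
have ey : fW p' = y by have := permKV sigW y; rewrite sigWE.
have [a1 b1] := fW_div p; have [a2 b2] := fW_div p'.
rewrite ex in a1 b1; rewrite ey in a2 b2.
rewrite /comb_cover => /orP[/andP[/andP[/eqP x0 /eqP y0] /eqP xy]|/andP[/eqP xy /eqP xy']].
- have : 0 < W p' by lia.
  move=> /W3 [q [qp' Wq]].
  have Wq' : W q = W p by lia.
  rewrite ltnNge; apply/negP => le.
  have : cnt p = 0 by lia.
  move/eqP; rewrite cards_eq0 => /eqP/setP/(_ q); rewrite !inE Wq' eqxx andbT.
  have : q < p by exact: leq_trans qp' le.
  by move=> ->.
- rewrite ltnNge; apply/negP => le.
  case: (ltngtP p' p) le => // [lt|/val_inj e] _.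
  + have := cnt_mono lt; lia.
  + move: xy'; rewrite b1 b2 e; lia.
Qed.

Lemma sigW_linext : is_linext sigW.
Proof.
apply/forallP => x; apply/forallP => y; apply/implyP => /andP[nxy /connectP[l pth ly]].
elim: l x pth ly nxy => [|z l IH] x /=; first by move=> _ ->; rewrite eqxx.
move=> /andP[cxz pth] ly nxy.
have h1 := sigW_cover cxz.
case: (eqVneq z y) => [ezy|nzy].
  by rewrite -ezy.
exact: ltn_trans h1 (IH z pth ly nzy).
Qed.

Lemma sigW_W (p : 'I_n) : sigW p %/ t = W p.
Proof. by rewrite sigWE; case: (fW_div p). Qed.

End Word.

Lemma bin_step N i : i < N./2 -> 'C(N, i) <= 'C(N, i.+1).
Proof.
move=> h; have e := mul_bin_left N i.
have h1 : i.+1 <= N - i by lia.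
have : i.+1 * 'C(N, i) <= i.+1 * 'C(N, i.+1).
  rewrite e; exact: leq_mul h1 (leqnn _).
by rewrite leq_pmul2l.
Qed.

Lemma bin_up N i : i <= N./2 -> 'C(N, i) <= 'C(N, N./2).
Proof.
move Hd: (N./2 - i) => d; elim: d i Hd => [|d IH] i Hd hi.
  by have -> : i = N./2 by lia.
apply: leq_trans (bin_step _) (IH _ _ _); lia.
Qed.

Lemma bin_max N i : 'C(N, i) <= 'C(N, N./2).
Proof.
case: (leqP i N./2) => h; first exact: bin_up.
case: (leqP i N) => h2; last by rewrite bin_small.
rewrite -bin_sub //; apply: bin_up; lia.
Qed.

Lemma bin_central N : 2 ^ N <= N.+1 * 'C(N, N./2).
Proof.
have := expnDn 1 1 N; rewrite addn1 => ->.
rewrite -[N.+1 in X in _ <= X](card_ord N.+1) -sum_nat_const.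
apply: leq_sum => i _; rewrite !exp1n !muln1; exact: bin_max.
Qed.

Lemma bin_central' N : 2 ^ N <= N.+1 * 'C(N, N - N./2).
Proof. rewrite bin_sub; [exact: bin_central | lia]. Qed.

Section Seg.
Variables m t : nat.
Hypothesis t2 : 1 < t.
Local Notation s := m.+2.
Local Notation n := (m.+2 * t).
Local Notation DF := {dffun forall k : 'I_m.+2, {set 'I_t}}.

Definition hi k := minn k.+1 m.+1.
Definition lo k := k.-1.
Definition cc k := if odd k then t - t./2 else t./2.
Definition Xnat (X : DF) k r :=
  [exists k' : 'I_s, exists r' : 'I_t, [&& val k' == k, val r' == r & r' \in X k']].
Definition WX (X : DF) p :=
  if Xnat X (p %/ t) (p %% t) then hi (p %/ t) else lo (p %/ t).
Definition FF (k : 'I_s) : simpl_pred {set 'I_t} :=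
  [pred Y : {set 'I_t} | (#|Y| == cc k) &&
     ((val k == 0) ==> [forall r : 'I_t, (val r == 0) ==> (r \notin Y)])].

Lemma tpos : 0 < t. Proof. lia. Qed.

Lemma XnatE X (k : 'I_s) (r : 'I_t) : Xnat X k r = (r \in X k).
Proof.
apply/existsP/idP => [[k' /existsP[r' /and3P[/eqP e1 /eqP e2 h]]]|h].
  by move/val_inj: e1 => <-; move/val_inj: e2 => <-.
by exists k; apply/existsP; exists r; rewrite !eqxx.
Qed.

Lemma WX_seg X (k : 'I_s) (r : 'I_t) :
  WX X (k * t + r) = if r \in X k then hi k else lo k.
Proof.
rewrite /WX; have [-> ->] := @divmodU t k r (k * t + r) (ltn_ord r) erefl.
by rewrite XnatE.
Qed.

Lemma kp_lt (p : 'I_n) : p %/ t < s. Proof. by rewrite ltn_divLR ?tpos. Qed.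
Definition kp (p : 'I_n) : 'I_s := Ordinal (kp_lt p).
Definition rp (p : 'I_n) : 'I_t := Ordinal (ltn_pmod p tpos).

Lemma WX_p X (p : 'I_n) : WX X p = if rp p \in X (kp p) then hi (kp p) else lo (kp p).
Proof. by rewrite -WX_seg /= -divn_eq. Qed.

Lemma WX_cases X (p : 'I_n) : WX X p = hi (p %/ t) \/ WX X p = lo (p %/ t).
Proof. by rewrite /WX; case: ifP; [left|right]. Qed.

Lemma WX_lt X (p : 'I_n) : WX X p < s.
Proof. have := kp_lt p; case: (WX_cases X p) => ->; rewrite /hi /lo; lia. Qed.

Lemma WX_321 X (p q r : 'I_n) : p < q -> q < r -> WX X q < WX X p -> WX X r < WX X q -> False.
Proof.
move=> pq qr h1 h2.
have d1 : p %/ t <= q %/ t by apply: leq_div2r; apply: ltnW.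
have d2 : q %/ t <= r %/ t by apply: leq_div2r; apply: ltnW.
have := WX_cases X p; have := WX_cases X q; have := WX_cases X r.
rewrite /hi /lo; lia.
Qed.


Lemma cc_pos k : 0 < cc k /\ cc k < t.
Proof. rewrite /cc; case: (odd k); lia. Qed.

Lemma WX_FO (X : DF) (hX : forall k, X k \in FF k) (p : 'I_n) :
  0 < WX X p -> exists q : 'I_n, q < p /\ WX X q = (WX X p).-1.
Proof.
move=> jpos; have jlt := WX_lt X p; have jc := WX_cases X p.
case: (ltnP 1 (WX X p)) => hj.
- have hK : (WX X p).-2 < s by lia.
  pose K := Ordinal hK.
  have : 0 < #|X K|.
    by move: (hX K); rewrite inE => /andP[/eqP -> _]; case: (cc_pos K).
  rewrite card_gt0 => /set0Pn [r rX].
  have hq : K * t + r < n.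
    have : K * t + r < K.+1 * t by have := ltn_ord r; rewrite mulSn; lia.
    move=> h; apply: (leq_trans h); rewrite leq_mul2r; apply/orP; right; exact: ltn_ord.
  exists (Ordinal hq); split.
  + rewrite /=; have := ltn_ord r; have := leq_divM p t.
    have : K.+1 <= p %/ t by move: jc; rewrite /hi /lo /=; lia.
    move=> h1 h2 h3.
    have : K.+1 * t <= p %/ t * t by rewrite leq_mul2r h1 orbT.
    rewrite mulSn /K /=; lia.
  + rewrite WX_seg rX /hi /=; lia.
- have h0 : 0 < n by rewrite muln_gt0 tpos.
  pose q := Ordinal h0.
  have Wq : WX X q = 0.
    have := WX_seg X ord0 (Ordinal tpos); rewrite /= mul0n add0n => ->.
    move: (hX ord0); rewrite inE => /andP[_ /= /forallP /(_ (Ordinal tpos)) /= /negbTE ->] //.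
  exists q; split; last by rewrite Wq; lia.
  rewrite /= lt0n; apply/eqP => p0.
  have : p = q by apply: val_inj.
  by move=> epq; move: jpos; rewrite epq Wq.
Qed.


Lemma card_sum N (P : nat -> bool) : #|[set p : 'I_N | P p]| = \sum_(p < N) P p.
Proof.
rewrite -sum1_card big_mkcond /=; apply: eq_bigr => i _; rewrite inE; by case: (P i).
Qed.

Lemma sum_if (A : {set 'I_t}) (a b : nat) :
  \sum_(r < t) (if r \in A then a else b) = #|A| * a + (t - #|A|) * b.
Proof.
rewrite (bigID [pred r | r \in A]) /=; congr (_ + _).
  by rewrite -sum_nat_const; apply: eq_big => // r ->.
have -> : t - #|A| = #|~: A| by rewrite [#|~: A|]cardsCs setCK card_ord.
rewrite -sum_nat_const.
by apply: eq_big => [r|r]; rewrite ?inE // => /negbTE ->.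
Qed.

Lemma sum_ind N a v : \sum_(k < N) ((k : nat) == a) * v = (a < N) * v.
Proof.
case: (ltnP a N) => h.
  rewrite (bigD1 (Ordinal h)) //= eqxx mul1n big1 ?addn0 //.
  move=> k; rewrite -(inj_eq val_inj) /= => /negbTE ->; by rewrite mul0n.
rewrite big1 // => k _; have : (k : nat) != a by have := ltn_ord k; lia.
by move/negbTE ->.
Qed.

Lemma cc_SS k : cc k.+2 = cc k. Proof. by rewrite /cc /= negbK. Qed.
Lemma cc_S k : cc k + cc k.+1 = t. Proof. rewrite /cc /=; case: (odd k) => /=; lia. Qed.

Definition GG j k := cc k * (hi k == j) + (t - cc k) * (lo k == j).

Lemma sum_GG j : j < s -> \sum_(k < s) GG j k = t.
Proof.
move=> hj.
case: (posnP j) => [j0|jpos].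
  rewrite (eq_bigr (fun k : 'I_s => ((k : nat) == 0) * (t - cc 0) + ((k : nat) == 1) * (t - cc 1))).
    rewrite big_split /= !sum_ind /=; have := cc_S 0; lia.
  move=> k _; rewrite /GG /hi /lo j0.
  case: (eqVneq (k : nat) 0) => [->|h1]; first by rewrite /=; lia.
  case: (eqVneq (k : nat) 1) => [->|h2]; first by rewrite /=; lia.
  lia.
case: (ltnP j m.+1) => hjm.
  rewrite (eq_bigr (fun k : 'I_s => ((k : nat) == j.-1) * cc j.-1 + ((k : nat) == j.+1) * (t - cc j.+1))).
    rewrite big_split /= !sum_ind.
    have -> : cc j.+1 = cc j.-1.
      have -> : j.+1 = j.-1.+2 by lia.
      exact: cc_SS.
    have := cc_pos j.-1; have -> : j.-1 < s by lia.
    have -> : j.+1 < s by lia.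
    lia.
  move=> k _; rewrite /GG /hi /lo.
  case: (eqVneq (k : nat) j.-1) => [->|h1]; first by lia.
  case: (eqVneq (k : nat) j.+1) => [->|h2]; first by lia.
  have := ltn_ord k; lia.
rewrite (eq_bigr (fun k : 'I_s => ((k : nat) == m) * cc m + ((k : nat) == m.+1) * cc m.+1)).
  rewrite big_split /= !sum_ind; have := cc_S m; lia.
move=> k _; rewrite /GG /hi /lo.
case: (eqVneq (k : nat) m) => [->|h1]; first by lia.
case: (eqVneq (k : nat) m.+1) => [->|h2]; first by lia.
have := ltn_ord k; lia.
Qed.


Lemma WX_count (X : DF) (hX : forall k, X k \in FF k) j :
  j < s -> #|[set p : 'I_n | WX X p == j]| = t.
Proof.
move=> hj; rewrite (@card_sum n (fun p => WX X p == j)).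
rewrite -(big_mkord xpredT (fun p => ((WX X p == j) : nat))) big_nat_mul.
rewrite big_mkord -[RHS](sum_GG hj); apply: eq_bigr => k _.
rewrite -{1}[k * t]add0n big_addn mulSn addnK big_mkord.
rewrite (eq_bigr (fun r : 'I_t => if r \in X k then ((hi k == j) : nat) else ((lo k == j) : nat))).
  rewrite sum_if; move: (hX k); rewrite inE => /andP[/eqP -> _].
  by rewrite /GG !(mulnC (cc k)) !(mulnC (t - cc k)).
by move=> r _; rewrite addnC WX_seg; case: ifP.
Qed.


Lemma kr_lt (k : 'I_s) (r : 'I_t) : k * t + r < n.
Proof.
have : k * t + r < k.+1 * t by have := ltn_ord r; rewrite mulSn; lia.
move=> h; apply: (leq_trans h); rewrite leq_mul2r; apply/orP; right; exact: ltn_ord.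
Qed.

Definition Phi (X : DF) : {perm 'I_n} := sigW s t (WX X).

Lemma Phi_good (X : DF) : X \in family FF ->
  is_linext (Phi X) && ~~ contains321 (Phi X).
Proof.
move/familyP => hX; apply/andP; split.
- apply: sigW_linext; [exact: WX_lt | exact: WX_count | exact: WX_FO].
- apply: sigW_n321; [exact: WX_lt | exact: WX_count | exact: WX_321].
Qed.

Lemma Phi_inj : {in family FF &, injective Phi}.
Proof.
move=> X1 X2 /familyP h1 /familyP h2 e.
have eW (p : 'I_n) : WX X1 p = WX X2 p.
  rewrite -(sigW_W (WX_lt X1) (WX_count h1)) -(sigW_W (WX_lt X2) (WX_count h2)).
  by rewrite /Phi in e; rewrite e.
apply/ffunP => k; apply/setP => r.
have := eW (Ordinal (kr_lt k r)); rewrite /= !WX_seg.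
have hl : hi k != lo k by rewrite /hi /lo; apply/eqP; have := ltn_ord k; lia.
case: (r \in X1 k); case: (r \in X2 k) => // e'; move: hl; by rewrite e' eqxx.
Qed.

Lemma fam_le : #|(family FF : simpl_pred DF)| <= A321_comb s t.
Proof.
rewrite -(card_in_imset Phi_inj) /A321_comb; apply: subset_leq_card.
apply/subsetP => _ /imsetP [X hX ->]; rewrite inE; exact: Phi_good.
Qed.

Lemma fam_card : #|(family FF : simpl_pred DF)| = \prod_(k < s) #|FF k|.
Proof. by rewrite card_family foldrE big_map big_enum. Qed.

Lemma FF_card_pos (k : 'I_s) : val k != 0 -> #|FF k| = 'C(t, cc k).
Proof.
move=> k0; rewrite -[t in 'C(t, _)](card_ord t) -card_draws.
apply: eq_card => Y; rewrite !inE (negbTE k0) /= andbT; done.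
Qed.

End Seg.

Lemma FF0_card m u : 'C(u.+1, (u.+2)./2) <= #|@FF m u.+2 ord0|.
Proof.
rewrite -[X in 'C(X, _)](card_ord u.+1) -card_draws.
have ginj : injective (fun Y : {set 'I_u.+1} => lift ord0 @: Y).
  apply: imset_inj; exact: lift_inj.
rewrite -(card_imset _ ginj); apply: subset_leq_card; apply/subsetP => Z /imsetP [Y].
rewrite inE => /eqP hY ->{Z}; rewrite inE /= (card_imset _ (@lift_inj _ ord0)) hY /cc /= eqxx /=.
apply/forallP => r; apply/implyP => /eqP r0; apply/imsetP => -[y _ ry].
by move: r0; rewrite ry /= /bump /=.
Qed.

Lemma lower m u : 2 ^ (m.+2 * u.+2) <= 2 * u.+3 ^ m.+2 * A321_comb m.+2 u.+2.
Proof.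
have t2 : 1 < u.+2 by [].
apply: (leq_trans _ (leq_mul (leqnn _) (fam_le m t2))).
rewrite fam_card.
have -> : u.+3 ^ m.+2 = \prod_(k < m.+2) u.+3 by rewrite prod_nat_const card_ord.
rewrite -mulnA -big_split /=.
have -> : 2 ^ (m.+2 * u.+2) = \prod_(k < m.+2) 2 ^ u.+2.
  by rewrite prod_nat_const card_ord -expnM mulnC.
rewrite (big_ord_recl m.+1 (fun _ => 2 ^ u.+2)).
rewrite (big_ord_recl m.+1 (fun k => u.+3 * #|@FF m u.+2 k|)) mulnA; apply: leq_mul.
- have h1 := FF0_card m u.
  have h2 := bin_central' u.+1.
  have e : u.+1 - (u.+1)./2 = (u.+2)./2 by lia.
  rewrite e in h2.
  rewrite expnS; apply: leq_mul => //.
  apply: leq_trans h2 _; apply: leq_mul => //.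
- apply: leq_prod => i _; rewrite FF_card_pos //.
  rewrite /cc; case: (odd _); [exact: bin_central' | exact: bin_central].
Qed.


Local Open Scope R_scope.
Unset Implicit Arguments.

Lemma INR_expn (a b : nat) : INR (expn a b) = INR a ^ b.
Proof.
elim: b => [|b IH]; first by rewrite expn0 /=.
by rewrite expnS -multE mult_INR IH.
Qed.

Lemma INR_muln (a b : nat) : INR (muln a b) = INR a * INR b.
Proof. by rewrite -multE mult_INR. Qed.

Lemma INR_leq (a b : nat) : (a <= b)%nat -> INR a <= INR b.
Proof. by move/leP; apply: le_INR. Qed.

Lemma ln_le' x y : 0 < x -> x <= y -> ln x <= ln y.
Proof.
move=> hx [h|<-]; last by apply: Rle_refl.
by apply: Rlt_le; apply: ln_increasing.
Qed.

Lemma ln_lin z : 0 < z -> ln z <= z - 1.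
Proof.
move=> hz; case: (Req_dec (ln z) 0) => h.
  rewrite h; have : 1 <= z.
    by rewrite -(exp_ln z hz) h exp_0; apply: Rle_refl.
  lra.
have := exp_ineq1 _ h; rewrite exp_ln //; lra.
Qed.

Lemma sandwich (s t a0 : nat) : (1 <= s)%nat -> (2 <= t)%nat ->
  (a0 <= 2^(s*t) * ((s*t).+1^s * (s*t).+1^s))%nat ->
  (2^(s*t) <= 2 * t.+1^s * a0)%nat ->
  Rabs (/ INR t * ln (INR a0) - INR s * ln 2) <=
    (ln 2 + 2 * INR s * ln (INR (s * t) + 1)) / INR t.
Proof.
move=> hs ht /INR_leq hU /INR_leq hL.
rewrite !INR_muln !INR_expn in hU hL.
rewrite (S_INR (s * t)) INR_muln in hU.
rewrite (S_INR t) in hL.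
have e2 : INR 2 = 2 by rewrite /=; lra.
rewrite e2 in hU hL.
rewrite INR_muln.
have Tge : 2 <= INR t by apply: (INR_leq 2 t ht).
have Sge : 1 <= INR s by apply: (INR_leq 1 s hs).
set T := INR t in Tge hU hL *; set S := INR s in Sge hU hL *; set a := INR a0 in hU hL *.
have l2 : 0 < ln 2 by have := ln_lt_2; lra.
have p2 : 0 < 2 ^ (s * t)%nat by apply: pow_lt; lra.
have pT : 0 < (T + 1) ^ s by apply: pow_lt; lra.
have pST : 0 < (S * T + 1) ^ s by apply: pow_lt; nra.
have apos : 0 < a.
  case: (Rlt_le_dec 0 a) => // h.
  have : 2 * (T + 1) ^ s * a <= 0 by nra.
  lra.
have lnU := ln_le' _ _ apos hU.
rewrite ln_mult ?ln_mult ?ln_pow ?INR_muln in lnU; try lra; try nra.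
have lnL := ln_le' _ _ p2 hL.
rewrite ln_mult ?ln_mult ?ln_pow ?INR_muln in lnL; try lra; try nra.
rewrite -/S -/T in lnU lnL.
have hTST : ln (T + 1) <= ln (S * T + 1) by apply: ln_le'; nra.
have hT0 : 0 <= ln (T + 1).
  rewrite -ln_1; apply: ln_le'; lra.
set u := ln (S * T + 1) in lnU hTST *; set w := ln (T + 1) in lnL hTST hT0.
set L := ln a in lnU lnL *.
have Tpos : 0 < T by lra.
apply: Rabs_le; split.
- have -> : / T * L - S * ln 2 = - ((ln 2 + 2 * S * u) / T) + (ln 2 + 2 * S * u + L - S * T * ln 2) / T.
    by field; lra.
  have : 0 <= (ln 2 + 2 * S * u + L - S * T * ln 2) / T.
    apply: Rmult_le_pos; last by apply: Rlt_le; apply: Rinv_0_lt_compat.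
    nra.
  lra.
- have -> : / T * L - S * ln 2 = (ln 2 + 2 * S * u) / T - (ln 2 + 2 * S * u - L + S * T * ln 2) / T.
    by field; lra.
  have : 0 <= (ln 2 + 2 * S * u - L + S * T * ln 2) / T.
    apply: Rmult_le_pos; last by apply: Rlt_le; apply: Rinv_0_lt_compat.
    nra.
  lra.
Qed.

Lemma ln_shift y k : 0 < y -> 0 < k -> ln y <= y / k - 1 + ln k.
Proof.
move=> hy hk.
have := ln_lin (y / k) (Rdiv_lt_0_compat _ _ hy hk).
rewrite /Rdiv ln_mult; last (by apply: Rinv_0_lt_compat); last by [].
rewrite ln_Rinv //; lra.
Qed.

Lemma e_small (s : nat) : (1 <= s)%nat -> forall eps, 0 < eps -> exists N : nat,
  forall t : nat, (N <= t)%coq_nat ->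
  (ln 2 + 2 * INR s * ln (INR (s * t) + 1)) / INR t < eps.
Proof.
move=> hs eps heps.
have Sge : 1 <= INR s by apply: (INR_leq 1 s hs).
set S := INR s in Sge *.
set k := 4 * S ^ 2 / eps + 1.
have kpos : 0 < k.
  rewrite /k; have : 0 <= 4 * S ^ 2 / eps.
    apply: Rmult_le_pos; [nra | apply: Rlt_le; apply: Rinv_0_lt_compat; lra].
  lra.
have kbig : 4 * S ^ 2 < eps * k.
  rewrite /k; have -> : eps * (4 * S ^ 2 / eps + 1) = 4 * S ^ 2 + eps by field; lra.
  lra.
have l2 : 0 < ln 2 by have := ln_lt_2; lra.
set c := ln 2 + 2 * S / k + 2 * S * Rabs (ln k).
have cpos : 0 <= c.
  rewrite /c; have : 0 <= 2 * S / k.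
    apply: Rmult_le_pos; [lra | apply: Rlt_le; apply: Rinv_0_lt_compat; lra].
  have := Rabs_pos (ln k); nra.
have [N HN] := INR_archimed (eps / 2) c ltac:(lra).
exists (Nat.max N 1) => t ht.
have tN : INR N <= INR t by apply: le_INR; lia.
have t1 : 1 <= INR t by apply: (le_INR 1); lia.
set T := INR t in tN t1 *.
rewrite INR_muln -/S -/T.
have Tpos : 0 < T by lra.
have hl := ln_shift (S * T + 1) k ltac:(nra) kpos.
have hk : ln k <= Rabs (ln k) by apply: Rle_abs.
have iq : k * / k = 1 by field; lra.
have qpos : 0 < / k by apply: Rinv_0_lt_compat.
apply: (Rmult_lt_reg_r T) => //.
rewrite /Rdiv Rmult_assoc Rinv_l; last lra.
rewrite Rmult_1_r.
have h1 : 2 * S * ln (S * T + 1) <= 2 * S * ((S * T + 1) / k - 1 + ln k) by nra.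
have h2 : 2 * S * ((S * T + 1) / k - 1 + ln k) <= 2 * S ^ 2 * T * / k + (c - ln 2).
  rewrite /c /Rdiv; nra.
have h3 : 2 * S ^ 2 * T * / k < eps / 2 * T.
  have : 4 * S ^ 2 * / k < eps by nra.
  nra.
have h4 : c < eps / 2 * T by nra.
lra.
Qed.

Lemma real_part (s : nat) (A : nat -> nat) : (1 <= s)%nat ->
  (forall t, (1 <= t)%nat -> (A t <= 2^(s*t) * ((s*t).+1^s * (s*t).+1^s))%nat) ->
  (forall t, (2 <= t)%nat -> (2^(s*t) <= 2 * t.+1^s * A t)%nat) ->
  Un_cv (fun t => Rpower (INR (A t)) (/ INR t)) (2 ^ s).
Proof.
move=> hs HU HL.
have -> : 2 ^ s = exp (INR s * ln 2).
  by rewrite -Rpower_pow; [rewrite /Rpower | lra].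
rewrite /Rpower.
apply: (continuity_seq exp); first by apply: derivable_continuous_pt; apply: derivable_pt_exp.
move=> eps heps.
have [N HN] := e_small s hs eps heps.
exists (Nat.max N 2) => t ht.
rewrite /R_dist.
apply: Rle_lt_trans (sandwich s t (A t) hs _ (HU t _) (HL t _)) (HN t _).
- by apply/leP; lia.
- by apply/leP; lia.
- by apply/leP; lia.
- lia.
Qed.


Lemma final (s : nat) (hs : (2 <= s)%coq_nat) :
  Un_cv (fun t : nat => Rpower (INR (A321_comb s t)) (/ INR t)) (2 ^ s).
Proof.
apply: real_part.
- by apply/leP; lia.
- move=> t ht; exact: upper.
- move=> t ht.
  case: s hs => [|[|m]] hs; try lia.
  case: t ht => [|[|u]] ht //.
  exact: lower.
Qed.

End Aux.

Theorem theorem6 (s : nat) (hs : (2 <= s)%nat) :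
  Un_cv (fun t : nat => Rpower (INR (A321_comb s t)) (/ INR t)) (2 ^ s).
Proof.
  exact (Aux.final s hs).
Qed.
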